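(* Let $(\alpha_n)_{n\ge0}$ be complex numbers with $|\alpha_n|<1$ and notation as in the context. For every integer $m$ and nonnegative integer $n$, \[ \det\left(\mu_{m+i-j}\right)_{0\le i,j\le n}=\prod_{k=0}^{n-1}(1-|\alpha_k|^2)^{n-k}\cdot\det\left(\mu_{m+i,j}\right)_{0\le i,j\le n}, \] where $\mu_{a,j}=\langle\Phi_j(z),z^a\rangle/\langle\Phi_j(z),\Phi_j(z)\rangle$ for integers $a$ and $j\ge0$, and the product is $1$ when $n=0$.
   Context: For a polynomial $f(z)=\sum_{k=0}^n a_kz^k$ of degree $n$, write $\overline{f}(z)=\sum_k\overline{a_k}z^k$ and $f^*(z)=z^n\overline{f}(1/z)$. Define monic $\Phi_n$ by $\Phi_0=1$, $\Phi_{n+1}(z)=z\Phi_n(z)-\overline{\alpha_n}\Phi_n^*(z)$. Let $\mathcal{L}$ be the unique linear functional on the space of Laurent polynomials with $\mathcal{L}(1)=1$ and $\mathcal{L}(\Phi_m(z)\overline{\Phi_n}(1/z))=0$ for $m\ne n$ (for a Laurent polynomial $g$, $\overline{g}$ conjugates all coefficients). Set $\langle f,g\rangle=\mathcal{L}(f(z)\overline{g}(1/z))$ and $\mu_k=\mathcal{L}(z^{-k})$ for integers $k$. *)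

(* Defs.v *)
From HB Require Import structures.
From mathcomp Require Import all_boot all_order all_algebra.
From mathcomp Require Import reals complex.
Set Implicit Arguments. Unset Strict Implicit. Unset Printing Implicit Defensive.
Import Order.TTheory GRing.Theory Num.Theory.
Local Open Scope ring_scope.

Section Defs.
Variable C : numClosedFieldType.

(* f^*(z) = z^n \bar f(1/z), n = deg f  (size f = n+1) *)
Definition pstar (f : {poly C}) : {poly C} :=
  \poly_(i < size f) (f`_(size f - 1 - i))^*.

Fixpoint Phi (alpha : nat -> C) (n : nat) : {poly C} :=
  match n with
  | 0 => 1
  | n'.+1 => 'X * Phi alpha n' - (alpha n')^* *: pstar (Phi alpha n')
  end.

(* A linear functional L on Laurent polynomials is determined (by linearity)
   by its values on the basis monomials z^k; we encode it by its moment
   sequence mu, mu k = L(z^(-k)), i.e. L(z^k) = mu (-k).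
   Lfun mu s applies L to the Laurent polynomial sum_(k,c) in s  c z^k. *)
Definition Lfun (mu : int -> C) (s : seq (int * C)) : C :=
  \sum_(p <- s) p.2 * mu (- p.1).

(* Laurent polynomial f(z) * conj(g)(1/z) = sum_{i,j} f_i conj(g_j) z^(i-j) *)
Definition mulLconj (f g : {poly C}) : seq (int * C) :=
  [seq ((i%:Z - j%:Z), f`_i * (g`_j)^*) | i <- iota 0 (size f), j <- iota 0 (size g)].

Definition ip (mu : int -> C) (f g : {poly C}) : C := Lfun mu (mulLconj f g).

Definition ipX (mu : int -> C) (f : {poly C}) (a : int) : C :=
  Lfun mu [seq (i%:Z - a, f`_i) | i <- iota 0 (size f)].

Definition mu2 (alpha : nat -> C) (mu : int -> C) (a : int) (j : nat) : C :=
  ipX mu (Phi alpha j) a / ip mu (Phi alpha j) (Phi alpha j).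

End Defs.

(* Main.v *)
Require Import Defs.
From HB Require Import structures.
From mathcomp Require Import all_boot all_order all_algebra.
From mathcomp Require Import reals complex.
From mathcomp Require Import zify ring.
Import Order.TTheory GRing.Theory Num.Theory.
Local Open Scope ring_scope.

Section S.
Variable C : numClosedFieldType.
Variable mu : int -> C.

Lemma sum_pad (f : {poly C}) N (F : nat -> C) : (size f <= N)%N ->
  \sum_(i < size f) f`_i * F i = \sum_(i < N) f`_i * F i.
Proof.
move=> h; rewrite -(big_mkord (fun _ => true) (fun i => f`_i * F i)).
rewrite -(big_mkord (fun _ => true) (fun i => f`_i * F i)).
rewrite (@big_cat_nat _ _ _ (size f) 0 N) //=.
rewrite [X in _ = _ + X]big_nat_cond [X in _ = _ + X]big1 ?addr0 // => i /andP[/andP[hi _] _].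
by rewrite nth_default ?mul0r.
Qed.

Lemma sum_iota (F : nat -> C) n : \sum_(i <- iota 0 n) F i = \sum_(i < n) F i.
Proof. by rewrite -(big_mkord (fun _ => true) F) /index_iota subn0. Qed.

Lemma ipXE N (f : {poly C}) (a : int) : (size f <= N)%N ->
  ipX mu f a = \sum_(i < N) f`_i * mu (a - i%:Z).
Proof.
move=> h; rewrite /ipX /Lfun big_map sum_iota -(sum_pad _ _ (fun i : nat => mu (a - i%:Z)) h).
by apply: eq_bigr => i _ /=; rewrite opprB.
Qed.

Definition ipY (g : {poly C}) (a : int) :=
  \sum_(j < size g) (g`_j)^* * mu (j%:Z - a).

Lemma sum_padc (f : {poly C}) N (F : nat -> C) : (size f <= N)%N ->
  \sum_(i < size f) (f`_i)^* * F i = \sum_(i < N) (f`_i)^* * F i.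
Proof.
move=> h; rewrite -(big_mkord (fun _ => true) (fun i => (f`_i)^* * F i)).
rewrite -(big_mkord (fun _ => true) (fun i => (f`_i)^* * F i)).
rewrite (@big_cat_nat _ _ _ (size f) 0 N) //=.
rewrite [X in _ = _ + X]big_nat_cond [X in _ = _ + X]big1 ?addr0 // => i /andP[/andP[hi _] _].
by rewrite nth_default ?conjC0 ?mul0r.
Qed.

Lemma ipYE N (g : {poly C}) (a : int) : (size g <= N)%N ->
  ipY g a = \sum_(j < N) (g`_j)^* * mu (j%:Z - a).
Proof. by move=> h; rewrite /ipY (sum_padc _ _ (fun j : nat => mu (j%:Z - a)) h). Qed.

Lemma ip_double (f g : {poly C}) : ip mu f g =
  \sum_(i < size f) \sum_(j < size g) f`_i * (g`_j)^* * mu (j%:Z - i%:Z).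
Proof.
rewrite /ip /Lfun /mulLconj big_allpairs_dep sum_iota.
apply: eq_bigr => i _; rewrite sum_iota; apply: eq_bigr => j _ /=.
by rewrite opprB.
Qed.

Lemma ipE1 N (f g : {poly C}) : (size g <= N)%N ->
  ip mu f g = \sum_(j < N) (g`_j)^* * ipX mu f j.
Proof.
move=> h; rewrite ip_double exchange_big /= -(sum_padc _ _ (fun j : nat => ipX mu f j) h).
apply: eq_bigr => j _; rewrite (ipXE _ _ _ (leqnn _)) mulr_sumr.
by apply: eq_bigr => i _; rewrite mulrCA mulrA.
Qed.

Lemma ipE2 N (f g : {poly C}) : (size f <= N)%N ->
  ip mu f g = \sum_(i < N) f`_i * ipY g i.
Proof.
move=> h; rewrite ip_double -(sum_pad _ _ (fun i : nat => ipY g i) h).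
apply: eq_bigr => i _; rewrite /ipY mulr_sumr.
by apply: eq_bigr => j _; rewrite mulrA.
Qed.


Lemma ipX_lin (f g : {poly C}) (a b : C) (x : int) :
  ipX mu (a *: f + b *: g) x = a * ipX mu f x + b * ipX mu g x.
Proof.
set N := maxn (size f) (size g).
have hf : (size f <= N)%N by rewrite leq_maxl.
have hg : (size g <= N)%N by rewrite leq_maxr.
have hs : (size (a *: f + b *: g)%R <= N)%N.
  apply: (leq_trans (size_polyD _ _)); rewrite geq_max.
  by apply/andP; split; apply: leq_trans (size_scale_leq _ _) _.
rewrite (ipXE _ _ _ hs) (ipXE _ _ _ hf) (ipXE _ _ _ hg) !mulr_sumr -big_split.
by apply: eq_bigr => i _; rewrite coefD !coefZ /= mulrDl !mulrA.
Qed.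

Lemma ipY_lin (f g : {poly C}) (a b : C) (x : int) :
  ipY (a *: f + b *: g) x = a^* * ipY f x + b^* * ipY g x.
Proof.
set N := maxn (size f) (size g).
have hf : (size f <= N)%N by rewrite leq_maxl.
have hg : (size g <= N)%N by rewrite leq_maxr.
have hs : (size (a *: f + b *: g)%R <= N)%N.
  apply: (leq_trans (size_polyD _ _)); rewrite geq_max.
  by apply/andP; split; apply: leq_trans (size_scale_leq _ _) _.
rewrite (ipYE _ _ _ hs) (ipYE _ _ _ hf) (ipYE _ _ _ hg) !mulr_sumr -big_split.
by apply: eq_bigr => i _; rewrite coefD !coefZ rmorphD !rmorphM /= mulrDl !mulrA.
Qed.

Lemma ipX_mulX (f : {poly C}) (x : int) : ipX mu ('X * f) x = ipX mu f (x - 1).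
Proof.
have h : (size ('X * f)%R <= (size f).+1)%N.
  rewrite mulrC; have [->|nz] := eqVneq f 0; first by rewrite mul0r size_poly0.
  by rewrite size_mulX.
rewrite (ipXE _ _ _ h) (ipXE _ _ _ (leqnn _)) big_ord_recl coefXM /= mul0r add0r.
apply: eq_bigr => i _; rewrite coefXM /=; congr (_ * mu _).
rewrite /bump /=; lia.
Qed.

Lemma ipY_mulX (f : {poly C}) (x : int) : ipY ('X * f) x = ipY f (x - 1).
Proof.
have h : (size ('X * f)%R <= (size f).+1)%N.
  rewrite mulrC; have [->|nz] := eqVneq f 0; first by rewrite mul0r size_poly0.
  by rewrite size_mulX.
rewrite (ipYE _ _ _ h) (ipYE _ _ _ (leqnn _)) big_ord_recl coefXM /= conjC0 mul0r add0r.
apply: eq_bigr => i _; rewrite coefXM /=; congr (_ * mu _).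
rewrite /bump /=; lia.
Qed.

Lemma coef_pstar (f : {poly C}) i :
  (pstar f)`_i = if (i < size f)%N then (f`_(size f - 1 - i))^* else 0.
Proof. by rewrite /pstar coef_poly. Qed.

Lemma ipX_pstar (f : {poly C}) n (x : int) : size f = n.+1 ->
  ipX mu (pstar f) x = ipY f (n%:Z - x).
Proof.
move=> hs.
have h : (size (pstar f) <= n.+1)%N by rewrite -hs size_poly.
rewrite (ipXE _ _ _ h) (ipYE _ _ _ (leqnn _)) hs (reindex_inj rev_ord_inj) /=.
apply: eq_bigr => i _; have hi := ltn_ord i.
rewrite coef_pstar hs /= ifT; last by lia.
rewrite subn1 /=.
have -> : (n - (n.+1 - i.+1))%N = i by lia.
congr (_ * mu _); lia.
Qed.

Lemma ipY_pstar (f : {poly C}) n (x : int) : size f = n.+1 ->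
  ipY (pstar f) x = ipX mu f (n%:Z - x).
Proof.
move=> hs.
have h : (size (pstar f) <= n.+1)%N by rewrite -hs size_poly.
rewrite (ipYE _ _ _ h) (ipXE _ _ _ (leqnn _)) hs (reindex_inj rev_ord_inj) /=.
apply: eq_bigr => i _; have hi := ltn_ord i.
rewrite coef_pstar hs /= ifT; last by lia.
rewrite subn1 /= conjCK.
have -> : (n - (n.+1 - i.+1))%N = i by lia.
congr (_ * mu _); lia.
Qed.

End S.


Arguments ipY {C} mu g a.

Section P.
Variable C : numClosedFieldType.
Variable alpha : nat -> C.
Variable mu : int -> C.

Lemma Phi_sz n : size (Phi alpha n) = n.+1 /\ (Phi alpha n)`_n = 1.
Proof.
elim: n => [|n [hs hc]] /=; first by rewrite size_poly1 coef1.
set p := Phi alpha n.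
have hps : (size (pstar p) <= n.+1)%N by rewrite -hs size_poly.
have hXp : size ('X * p)%R = n.+2.
  by rewrite mulrC size_mulX ?hs // -size_poly_eq0 hs.
split.
  rewrite size_polyDl hXp // size_polyN.
  by apply: leq_ltn_trans (size_scale_leq _ _) _.
by rewrite coefB coefXM coefZ coef_pstar /= hc hs ltnn mulr0 subr0.
Qed.

Lemma Phi_size n : size (Phi alpha n) = n.+1.
Proof. by case: (Phi_sz n). Qed.
Lemma Phi_lead n : (Phi alpha n)`_n = 1.
Proof. by case: (Phi_sz n). Qed.

Hypothesis horth : forall m n : nat, m <> n -> ip mu (Phi alpha m) (Phi alpha n) = 0.

Lemma orthX n k : (k < n)%N -> ipX mu (Phi alpha n) k = 0.
Proof.
elim/ltn_ind: k => k IH hk.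
have := horth n k ltac:(lia).
rewrite (@ipE1 _ mu k.+1 _ _ (eq_leq (Phi_size k))) big_ord_recr /= Phi_lead conjC1 mul1r.
rewrite big1 ?add0r // => j _.
by rewrite IH ?mulr0 //; have := ltn_ord j; lia.
Qed.

Lemma orthY n k : (k < n)%N -> ipY mu (Phi alpha n) k = 0.
Proof.
elim/ltn_ind: k => k IH hk.
have := horth k n ltac:(lia).
rewrite (@ipE2 _ mu k.+1 _ _ (eq_leq (Phi_size k))) big_ord_recr /= Phi_lead mul1r.
rewrite big1 ?add0r // => j _.
by rewrite IH ?mulr0 //; have := ltn_ord j; lia.
Qed.

Lemma kappaX n : ip mu (Phi alpha n) (Phi alpha n) = ipX mu (Phi alpha n) n.
Proof.
rewrite (@ipE1 _ mu n.+1 _ _ (eq_leq (Phi_size n))) big_ord_recr /= Phi_lead conjC1 mul1r.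
rewrite big1 ?add0r // => j _.
by rewrite orthX ?mulr0.
Qed.

Lemma kappaS n : ip mu (Phi alpha n.+1) (Phi alpha n.+1)
   = ip mu (Phi alpha n) (Phi alpha n) * (1 - `|alpha n| ^+ 2).
Proof.
set c := Phi alpha n.
have eP : Phi alpha n.+1 = 1 *: ('X * c) + (- (alpha n)^*) *: pstar c.
  by rewrite /= scale1r scaleNr.
have h0 := horth 0 n.+1 ltac:(lia).
rewrite eP (@ipE2 _ mu 1 _ _) ?size_poly1 // big_ord1 coef1 mul1r in h0.
rewrite ipY_lin ipY_mulX (@ipY_pstar _ mu c n _ (Phi_size n)) in h0.
rewrite kappaX [in LHS]eP ipX_lin ipX_mulX (@ipX_pstar _ mu c n _ (Phi_size n)).
rewrite /c -/c.
have e0 : (nat_of_ord (@ord0 0))%:Z = 0 by [].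
rewrite e0 subr0 conjC1 mul1r raddfN /= conjCK mulNr -kappaX in h0.
have e1 : ((n.+1)%:Z - 1) = n%:Z by lia.
have e2 : (n%:Z - (n.+1)%:Z) = (0 - 1) by lia.
rewrite e1 e2 -kappaX.
move/eqP: h0; rewrite subr_eq0 => /eqP ->.
rewrite normCK mul1r; ring.
Qed.

End P.

Lemma prod_tri (C : numClosedFieldType) (a : nat -> C) n :
  \prod_(j < n.+1) \prod_(k < j) a k = \prod_(k < n) a k ^+ (n - k)%N.
Proof.
elim: n => [|n IH]; first by rewrite big_ord1 !big_ord0.
rewrite big_ord_recr IH [in RHS]big_ord_recr.
have -> : (n.+1 - (@ord_max n))%N = 1%N by rewrite subSnn.
rewrite expr1; change (nat_of_ord (@ord_max n.+1)) with n.+1.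
rewrite [\prod_(k < n.+1) a k]big_ord_recr.
rewrite /=.
rewrite mulrA.
rewrite -big_split.
apply: (congr1 (fun x => x * a n)).
apply: eq_bigr => k _.
rewrite subSn; last exact: ltnW (ltn_ord k).
by rewrite exprSr.
Qed.

Lemma prod_neq0 (C : numClosedFieldType) n (F : 'I_n -> C) :
  (forall i, F i != 0) -> \prod_(i < n) F i != 0.
Proof.
move=> h; apply: (big_ind (fun x => x != 0)) => //; first exact: oner_neq0.
by move=> x y hx hy; rewrite mulf_neq0.
Qed.

Lemma kappa_val (C : numClosedFieldType) (alpha : nat -> C) (mu : int -> C)
  (hL1 : mu 0 = 1)
  (horth : forall m n : nat, m <> n -> ip mu (Phi alpha m) (Phi alpha n) = 0) n :
  ip mu (Phi alpha n) (Phi alpha n) = \prod_(k < n) (1 - `|alpha k| ^+ 2).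
Proof.
elim: n => [|n IH].
  have -> : Phi alpha 0 = 1 by [].
  rewrite big_ord0 (@ipE1 _ mu 1 _ _) ?size_poly1 // big_ord1 coef1 eqxx conjC1 mul1r.
  by rewrite (@ipXE _ mu 1 _ _) ?size_poly1 // big_ord1 coef1 eqxx mul1r subrr.
by rewrite (@kappaS _ alpha mu horth) IH big_ord_recr.
Qed.

Local Open Scope complex_scope.

Theorem proposition2p6 (R : realType) (alpha : nat -> R[i]) (mu : int -> R[i])
  (halpha : forall k : nat, `|alpha k| < 1)
  (hL1 : mu 0 = 1)
  (hLorth : forall m n : nat, m <> n -> ip mu (Phi alpha m) (Phi alpha n) = 0)
  (m : int) (n : nat) :
  \det (\matrix_(i < n.+1, j < n.+1) mu (m + i%:Z - j%:Z))
  = (\prod_(k < n) (1 - `|alpha k| ^+ 2) ^+ (n - k)%N)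
    * \det (\matrix_(i < n.+1, j < n.+1) mu2 alpha mu (m + i%:Z) j).
Proof.
pose kap := fun j : nat => ip mu (Phi alpha j) (Phi alpha j).
have hk j : kap j = \prod_(k < j) (1 - `|alpha k| ^+ 2) := @kappa_val _ alpha mu hL1 hLorth j.
have ha k : 1 - `|alpha k| ^+ 2 != 0.
  by rewrite subr_eq0 eq_sym lt_eqF // exprn_ilt1.
have hkn j : kap j != 0 by rewrite hk; apply: prod_neq0.
set M1 := \matrix_(i < n.+1, j < n.+1) mu (m + i%:Z - j%:Z).
pose V := \matrix_(j < n.+1, l < n.+1) (Phi alpha j)`_l.
pose D := diag_mx (\row_(j < n.+1) (kap j)^-1).
have eM : \matrix_(i < n.+1, j < n.+1) mu2 alpha mu (m + i%:Z) j = M1 *m V^T *m D.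
  apply/matrixP => i j; rewrite mul_mx_diag !mxE /mu2.
  rewrite (@ipXE _ mu n.+1); last by rewrite Phi_size.
  congr (_ * _); apply: eq_bigr => l _; rewrite !mxE mulrC.
  by [].
have hV : is_trig_mx V.
  by apply/is_trig_mxP => i j hij; rewrite mxE nth_default // Phi_size.
have dV : \det V = 1.
  rewrite (det_trig hV) big1 // => i _; rewrite mxE; exact: Phi_lead.
have dD : \det D = (\prod_(k < n) (1 - `|alpha k| ^+ 2) ^+ (n - k)%N)^-1.
  rewrite det_diag -(@prod_tri _ (fun k => 1 - `|alpha k| ^+ 2) n) -prodfV; apply: eq_bigr => i _.
  by rewrite mxE hk.
have hP : \prod_(k < n) (1 - `|alpha k| ^+ 2) ^+ (n - k)%N != 0.
  by apply: prod_neq0 => k; rewrite expf_neq0.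
rewrite eM !det_mulmx det_tr dV dD mulr1 mulrC -mulrA mulVf ?mulr1 //.
Qed.
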